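(* With $H$ and the induced comodules as in the context, let $f\in F$, let $V$ be a simple right $\Bbbk^{G_f}_{\tau_f}$-comodule and $\tilde V=(V\otimes\Bbbk f)\Box_{H'_f}H$ the induced right $H$-comodule. If $\tilde V^*\cong\tilde V$, then $G_{f,f^{-1}}=\{g\in G\mid g\triangleright f=f^{-1}\}\neq\emptyset$.
   Context: Standing setup: $\Bbbk$ is an algebraically closed field of characteristic $0$, $F$ a group (possibly infinite), $G$ a finite group, and $(F,G,\triangleleft,\triangleright)$ a matched pair: $\triangleright:G\times F\to F$ a left action of $G$ on the set $F$, $\triangleleft:G\times F\to G$ a right action of $F$ on the set $G$, with $g\triangleright(ff')=(g\triangleright f)((g\triangleleft f)\triangleright f')$ and $(gg')\triangleleft f=(g\triangleleft(g'\triangleright f))(g'\triangleleft f)$. Maps $\sigma:G\times F\times F\to\Bbbk^\times$ and $\tau:G\times G\times F\to\Bbbk^\times$ satisfy: $\sigma(g;1_F,f)=\sigma(g;f,1_F)=\sigma(1_G;f,f')=1$; $\sigma(g\triangleleft f;f',f'')\sigma(g;f,f'f'')=\sigma(g;f,f')\sigma(g;ff',f'')$; $\tau(1_G,g;f)=\tau(g,1_G;f)=\tau(g,g';1_F)=1$; $\tau(g,g';g''\triangleright f)\tau(gg',g'';f)=\tau(g,g'g'';f)\tau(g',g'';f)$; and $\sigma(gg';f,f')\tau(g,g';ff')=\sigma(g;g'\triangleright f,(g'\triangleleft f)\triangleright f')\sigma(g';f,f')\tau(g,g';f)\tau(g\triangleleft(g'\triangleright f),g'\triangleleft f;f')$.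 $H=\Bbbk^G{}^\tau\#_\sigma\Bbbk F$ has basis $\{p_g\#f\}$, product $(p_g\#f)(p_{g'}\#f')=\delta_{g\triangleleft f,g'}\sigma(g;f,f')p_g\#ff'$, coproduct $\Delta(p_g\#f)=\sum_{x\in G}\tau(gx^{-1},x;f)\,p_{gx^{-1}}\#(x\triangleright f)\otimes p_x\#f$, counit $\varepsilon(p_g\#f)=\delta_{g,1_G}$, antipode $S(p_g\#f)=\sigma(g^{-1};g\triangleright f,(g\triangleright f)^{-1})^{-1}\tau(g^{-1},g;f)^{-1}p_{(g\triangleleft f)^{-1}}\#(g\triangleright f)^{-1}$. $G_f=\{g\in G\mid g\triangleright f=f\}$; $\Bbbk^{G_f}_{\tau_f}$ is the coalgebra with basis $\{p_g\}_{g\in G_f}$, $\Delta(p_g)=\sum_{x\in G_f}\tau(gx^{-1},x;f)p_{gx^{-1}}\otimes p_x$, $\varepsilon(p_g)=\delta_{g,1_G}$; $H'_f$ is the coalgebra with basis $\{p_g\#f'\mid g\in G_f,f'\in F\}$, $\Delta(p_g\#f')=\sum_{x\in G_f}\tau(gx^{-1},x;f')p_{gx^{-1}}\#(x\triangleright f')\otimes p_x\#f'$; $H$ is a left $H'_f$-comodule via $(\pi_f\otimes\mathrm{id})\Delta$ ($\pi_f$ kills $p_g\#f'$, $g\notin G_f$). $V\otimes\Bbbk f$ is a right $H'_f$-comodule via $v\otimes f\mapsto\sum_gv_g\otimes f\otimes p_g\#f$ where $\rho(v)=\sum_{g\in G_f}v_g\otimes p_g$; $\tilde V$ is the cotensor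 product with right $H$-coaction $\mathrm{id}\otimes\Delta$, and $\tilde V^*$ its dual comodule. *)

(* Defs.v *)
From HB Require Import structures.
From mathcomp Require Import all_boot all_order all_algebra all_fingroup.
From mathcomp Require Import boolp classical_sets fsbigop.

Set Implicit Arguments.
Unset Strict Implicit.
Unset Printing Implicit Defensive.

Import GRing.Theory.
Local Open Scope ring_scope.

(* Setting: k field, G finite group, F group (possibly infinite, carried by a
   groupType of mathcomp's monoid library), ▷ = act, ◁ = ract. *)
Section HopfData.
Variables (k : fieldType) (G : finGroupType) (F : groupType).
Variables (act : G -> F -> F) (ract : G -> F -> G).
Variables (sigma : G -> F -> F -> k) (tau : G -> G -> F -> k).

Definition matched_pair : Prop :=
  [/\ (forall f, act 1%g f = f)
        /\ (forall g g' f, act (g * g')%g f = act g (act g' f)),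
      (forall g, ract g 1%g = g)
        /\ (forall g f f', ract g (f * f')%g = ract (ract g f) f'),
      (forall g f f', act g (f * f')%g = (act g f * act (ract g f) f')%g)
    & (forall g g' f, ract (g * g')%g f = (ract g (act g' f) * ract g' f)%g)].

Definition Hcocycle : Prop :=
  [/\ (forall g f f', sigma g f f' != 0) /\ (forall g g' f, tau g g' f != 0),
      (forall g f, sigma g 1%g f = 1 /\ sigma g f 1%g = 1)
        /\ (forall f f', sigma 1%g f f' = 1),
      (forall g f f' f'', sigma (ract g f) f' f'' * sigma g f (f' * f'')%g
                          = sigma g f f' * sigma g (f * f')%g f''),
      (forall g f, tau 1%g g f = 1 /\ tau g 1%g f = 1)
        /\ (forall g g', tau g g' 1%g = 1) /\
      (forall g g' g'' f, tau g g' (act g'' f) * tau (g * g')%g g'' f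
                          = tau g (g' * g'')%g f * tau g' g'' f)
    & (forall g g' f f',
          sigma (g * g')%g f f' * tau g g' (f * f')%g
          = sigma g (act g' f) (act (ract g' f) f') * sigma g' f f'
            * tau g g' f * tau (ract g (act g' f)) (ract g' f) f')].

(* Basis of H = k^G{}^tau #_sigma kF : b = (g, f) stands for p_g # f. *)
Definition Hbasis := (G * F)%type.

(* Coefficient of (p_{h1}#f1) ⊗ (p_{h2}#f2) in Δ(p_g#f0), read off from
   Δ(p_g#f) = Σ_x τ(gx^{-1},x;f) p_{gx^{-1}}#(x▷f) ⊗ p_x#f. *)
Definition Hcop (b b1 b2 : Hbasis) : k :=
  let: (g, f0) := b in let: (h1, f1) := b1 in let: (h2, f2) := b2 in
  if [&& f2 == f0, f1 == act h2 f0 & h1 == (g * h2^-1)%g]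
  then tau h1 h2 f0 else 0.

(* Antipode: S(p_g#f) = σ(g^{-1}; g▷f,(g▷f)^{-1})^{-1} τ(g^{-1},g;f)^{-1}
                         p_{(g◁f)^{-1}} # (g▷f)^{-1}.
   Hanti b b' = coefficient of the basis vector b' in S(b). *)
Definition Hanti (b b' : Hbasis) : k :=
  let: (g, f0) := b in
  if b' == ((ract g f0)^-1, (act g f0)^-1)%g
  then (sigma g^-1 (act g f0) (act g f0)^-1)^-1 * (tau g^-1 g f0)^-1
  else 0.

Definition inGf (f : F) (g : G) : bool := act g f == f.

(* A right k^{G_f}_{τ_f}-comodule structure on V = k^n (row vectors):
   ρ(v) = Σ_{g ∈ G_f} (v *m c g) ⊗ p_g  (c g = 0 for g ∉ G_f). *)
Definition Gf_comodule (f : F) (n : nat) (c : G -> 'M[k]_n) : Prop :=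
  [/\ (forall g, ~~ inGf f g -> c g = 0),
      c 1%g = 1%:M
    & (forall h x, inGf f h -> inGf f x ->
         c x *m c h = tau h x f *: c (h * x)%g)].

Definition simple_Gf_comodule (f : F) (n : nat) (c : G -> 'M[k]_n) : Prop :=
  Gf_comodule f c /\ (0 < n)%N /\
  (forall U : 'M[k]_n, (forall g, (U *m c g <= U)%MS) ->
      U == 0 \/ row_full U).

Section Induced.
Local Open Scope classical_set_scope.
Definition fsum (V : nmodType) (u : Hbasis -> V) : V :=
  \sum_(b \in [set: Hbasis]) u b.
End Induced.

Section Cotensor.
Variables (f : F) (n : nat) (c : G -> 'M[k]_n).

(* Elements of M ⊗ H, M = V ⊗ kf ≅ V, are written t = Σ_b t b ⊗ b with
   t : Hbasis -> 'rV_n of finite support. *)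
Definition finsupp (t : Hbasis -> 'rV[k]_n) : Prop :=
  exists s : seq Hbasis, forall b, b \notin s -> t b = 0.

(* t ∈ Ṽ = (V⊗kf) □_{H'_f} H : (ρ_M ⊗ id) t = (id ⊗ (π_f⊗id)Δ) t, compared on
   the basis (p_a#f1) ⊗ (p_x#f2), a ∈ G_f, of H'_f ⊗ H. *)
Definition inVt (t : Hbasis -> 'rV[k]_n) : Prop :=
  finsupp t /\
  forall (a x : G) (f1 f2 : F), inGf f a ->
    (if f1 == f then t (x, f2) *m c a else 0)
    = fsum (fun b => Hcop b (a, f1) (x, f2) *: t b).

(* Coaction of Ṽ: (id⊗Δ) t = Σ_{b2} (tco t b2) ⊗ b2 ∈ Ṽ ⊗ H. *)
Definition tco (t : Hbasis -> 'rV[k]_n) (b2 : Hbasis) : Hbasis -> 'rV[k]_n :=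
  fun b1 => fsum (fun b => Hcop b b1 b2 *: t b).

(* Ṽ^* = linear functionals on Ṽ: functions on the ambient space that are
   linear on Ṽ, two of them being equal when they agree on Ṽ. *)
Definition lin_on (phi : (Hbasis -> 'rV[k]_n) -> k) : Prop :=
  forall (a : k) t u, inVt t -> inVt u ->
    phi (fun b => a *: t b + u b) = a * phi t + phi u.

Definition agree (phi psi : (Hbasis -> 'rV[k]_n) -> k) : Prop :=
  forall t, inVt t -> phi t = psi t.

(* Dual coaction: ρ*(φ) = Σ_b (dco φ b) ⊗ b, where
   ⟨φ_0, t⟩ φ_1 = ⟨φ, t_0⟩ S(t_1). *)
Definition dco (phi : (Hbasis -> 'rV[k]_n) -> k) (b : Hbasis)
  : (Hbasis -> 'rV[k]_n) -> k :=
  fun t => fsum (fun b' => Hanti b' b * phi (tco t b')).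

Definition induced_selfdual : Prop :=
  exists Psi : (Hbasis -> 'rV[k]_n) -> ((Hbasis -> 'rV[k]_n) -> k),
    [/\ (forall t, inVt t -> lin_on (Psi t)),
        (forall (a : k) t u, inVt t -> inVt u ->
           agree (Psi (fun b => a *: t b + u b))
                 (fun w => a * Psi t w + Psi u w)),
        (forall t, inVt t -> agree (Psi t) (fun _ => 0) ->
           forall b, t b = 0),
        (forall phi, lin_on phi -> exists2 t, inVt t & agree phi (Psi t))
      & (forall t b, inVt t -> agree (Psi (tco t b)) (dco (Psi t) b))].

End Cotensor.
End HopfData.

(* Main.v *)
Require Import Defs.
From HB Require Import structures.
From mathcomp Require Import all_boot all_order all_algebra all_fingroup.
From mathcomp Require Import boolp classical_sets fsbigop.
From Stdlib Require Import Classical.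

Import GRing.Theory.
Local Open Scope ring_scope.

Lemma fsum_one (G : finGroupType) (F : groupType) (V : nmodType) (b0 : Hbasis G F) (u : Hbasis G F -> V) :
  (forall b, b != b0 -> u b = 0) -> fsum u = u b0.
Proof.
move=> H; rewrite /fsum -(fsbig_widen [set b0] [set: Hbasis G F] u) //.
  by rewrite fsbig_set1.
move=> b [_ /=] nb; apply: H; apply/eqP => E; apply: nb; exact: E.
Qed.

Lemma fsum_neq0 (G : finGroupType) (F : groupType) (V : nmodType) (u : Hbasis G F -> V) :
  fsum u != 0 -> exists b, u b != 0.
Proof.
move=> H; apply: NNPP => N; move/eqP: H; apply; rewrite /fsum fsbig1 // => b _.
apply/eqP; apply: NNPP => nb; apply: N; exists b; exact/negP.
Qed.


Theorem corollary5p7 (k : closedFieldType) (G : finGroupType) (F : groupType)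
  (act : G -> F -> F) (ract : G -> F -> G)
  (sigma : G -> F -> F -> k) (tau : G -> G -> F -> k)
  (f : F) (n : nat) (c : G -> 'M[k]_n) :
  [pchar k] =i pred0 ->
  matched_pair act ract ->
  Hcocycle act ract sigma tau ->
  simple_Gf_comodule act tau f c ->
  induced_selfdual act ract sigma tau f c ->
  exists g : G, act g f = (f^-1)%g.
Proof.
move=> _ MP HC SC.
move: MP => [[a1 aM] _ _ _].
case: HC => _ _ _ [tauN _] _.
have tau1 : forall g f, tau 1%g g f = 1 by move=> g f0; case: (tauN g f0).
have taur1 : forall g f, tau g 1%g f = 1 by move=> g f0; case: (tauN g f0).
move: SC => [[c0 c1 cM] [n0 _]].
move=> [Psi [Hlin _ Hinj _ Hcom]].
have cop_sum : forall (w : Hbasis G F -> 'rV[k]_n) a f1 x f2,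
  fsum (fun b => Hcop act tau b (a, f1) (x, f2) *: w b)
  = if f1 == act x f2 then tau a x f2 *: w ((a * x)%g, f2) else 0.
  move=> w a f1 x f2; rewrite (@fsum_one _ _ _ ((a * x)%g, f2)).
    rewrite /Hcop eqxx mulgK /=; case: (f1 == act x f2) => //=.
      by rewrite eqxx.
    by rewrite scale0r.
  move=> [g f0] nb; rewrite /Hcop.
  case: (f2 =P f0) => [E|] /=; last by rewrite scale0r.
  case: (f1 == act x f0) => /=; last by rewrite scale0r.
  case: (a =P (g * x^-1)%g) => [Ea|] /=; last by rewrite scale0r.
  by exfalso; move/eqP: nb; apply; rewrite Ea mulgVK E.
have Gf1 : inGf act f 1%g by rewrite /inGf a1.
have Hsupp : forall w, inVt act tau f c w -> forall x f2,
    w (x, f2) != 0 -> act x f2 = f.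
  move=> w [_ Hw] x f2 nz; apply: NNPP => ne.
  have := Hw 1%g x (act x f2) f2 Gf1.
  rewrite cop_sum eqxx tau1 scale1r mul1g.
  case: eqP => // _ E; move/eqP: nz; apply; by rewrite -E.
have z0 : inVt act tau f c (fun _ => 0).
  split; first by exists [::].
  move=> a x f1 f2 _; rewrite cop_sum mul0mx scaler0.
  by case: ifP; case: ifP.
pose v : 'rV[k]_n := delta_mx 0 (Ordinal n0).
have v0 : v != 0.
  apply/eqP => /matrixP /(_ 0 (Ordinal n0)); rewrite !mxE !eqxx /=.
  by move/eqP; rewrite oner_eq0.
pose t : Hbasis G F -> 'rV[k]_n :=
  fun b => if b.2 == f then v *m c b.1 else 0.
have Gfinv : forall a x, inGf act f a -> inGf act f (a * x)%g -> inGf act f x.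
  move=> a x; rewrite /inGf aM => /eqP Ha /eqP E; apply/eqP.
  by rewrite -[act x f]a1 -(mulVg a) aM E -{1}Ha -aM mulVg a1.
have Ht : inVt act tau f c t.
  split.
    exists [seq (x, f) | x <- enum G] => [[x f2]] nin; rewrite /t /=.
    case: eqP => // E; exfalso; move/negP: nin; apply; rewrite E.
    by apply/mapP; exists x; rewrite ?mem_enum.
  move=> a x f1 f2 Ha; rewrite cop_sum /t /=.
  case: (f2 =P f) => [->|_]; last by rewrite mul0mx scaler0; case: ifP; case: ifP.
  case Hx: (inGf act f x).
    move: (Hx); rewrite /inGf => /eqP ->.
    case: ifP => _; last by [].
    by rewrite -mulmxA cM // scalemxAr.
  rewrite (c0 x) ?Hx // mulmx0 mul0mx.
  rewrite (c0 (a * x)%g) ?mulmx0 ?scaler0; first by case: ifP; case: ifP.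
  by apply/negP => H; move: Hx; rewrite (Gfinv a x Ha H).
have t10 : t (1%g, f) != 0 by rewrite /t /= eqxx c1 mulmx1.
have tcot : tco act tau t (1%g, f) = t.
  apply: funext => [[h1 f1]].
  rewrite /tco cop_sum a1 taur1 scale1r mulg1 /t /=.
  by rewrite eqxx.
have [w [Hw nzw]] : exists w, inVt act tau f c w /\ Psi t w != 0.
  apply: NNPP => N; move/negP: t10; apply; apply/eqP.
  apply: (Hinj t Ht) => w Hw; apply: NNPP => ne; apply: N; exists w.
  split => //; exact/eqP.
have Psi0 : Psi t (fun _ => 0) = 0.
  have := Hlin t Ht 1 _ _ z0 z0.
  have -> : (fun b : Hbasis G F => 1 *: (0 : 'rV[k]_n) + 0) = (fun _ => 0).
    by apply: funext => b; rewrite scale1r addr0.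
  rewrite mul1r => /(congr1 (fun x => x - Psi t (fun _ => 0))); rewrite subrr addrK => <-.
  by [].
have := Hcom t (1%g, f) Ht w Hw; rewrite tcot => E.
move: nzw; rewrite E /dco => /fsum_neq0 [[g' f'] nz].
move: nz; rewrite /Hanti.
case: ((1%g, f) =P ((ract g' f')^-1, (act g' f')^-1)%g) => [E0 | _]; last by rewrite mul0r eqxx.
case: E0 => _ Ef.
move=> nz; have nzP : Psi t (tco act tau w (g', f')) != 0.
  by apply: contraNneq nz => ->; rewrite mulr0.
have [[h1 f1] nz1] : exists b1, tco act tau w (g', f') b1 != 0.
  apply: NNPP => N; move/eqP: nzP; apply.
  have -> : tco act tau w (g', f') = (fun _ => 0); last exact: Psi0.
  apply: funext => b1; apply: NNPP => ne; apply: N.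
  by exists b1; apply/eqP.
move: nz1; rewrite /tco cop_sum; case: (f1 =P act g' f') => _; last by rewrite eqxx.
move=> nz1; have Hact : act (h1 * g')%g f' = f.
  apply: (Hsupp w Hw); apply: contraNneq nz1 => ->; by rewrite scaler0.
exists (g' * (h1 * g')^-1)%g.
rewrite -{1}Hact -(aM (g' * (h1 * g')^-1)%g (h1 * g')%g f') mulgVK Ef invgK.
by [].
Qed.
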